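(* Let $N$ be the surface described in the context, with $l>0$. The configuration $((0,0),(0,\pi))$ in $N$ (two antipodal points on the circle $\{0\}\times S^1$ where $H_0$ is glued) is insecure; in particular $N$ is not a secure manifold.
   Context: Construction of $N$: let $C=[0,l]\times S^1$ be the flat cylinder of length $l>0$ and radius $1$, with points written $(t,\theta)$, $t\in[0,l]$, $\theta\in\mathbb{R}/2\pi\mathbb{Z}$. Let $H_0$ and $H_l$ be two hemispheres of the round unit sphere, and let $N$ be obtained by gluing the equator of $H_0$ isometrically to $\{0\}\times S^1$ and the equator of $H_l$ isometrically to $\{l\}\times S^1$, so that $N$ is a closed $C^1$ surface with a piecewise smooth Riemannian metric; geodesics of $N$ are the $C^1$ curves that are geodesics in each of the pieces. Conventions: a geodesic has positive finite length and is parametrized by $[0,1]$ proportionally to arclength; $G(x,y)$ is the set of geodesics from $x$ to $y$; a geodesic passes through $z$ if $z=\gamma(t)$ for some $t\in(0,1)$; $(x,y)$ is secure if there is a finite set $B$ such that every geodesic in $G(x,y)$ passes through a point of $B$, insecure otherwise; a manifold is secure if all its configurations are secure. *)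

(* Defs.v *)
From Stdlib Require Import Reals List.
Open Scope R_scope.

(* Points of R^3; the surface N is realized as the "capsule" in R^3:
   the flat cylinder C = [0,l] x S^1 embedded as (t,theta) |-> (cos theta, sin theta, t),
   H_0 = lower unit hemisphere centered at (0,0,0) (glued along {0} x S^1),
   H_l = upper unit hemisphere centered at (0,0,l) (glued along {l} x S^1).
   The induced metric on each piece is exactly the flat / round one, and
   the gluings are isometric along the equators. *)
Definition pt := (R * R * R)%type.
Definition px (p : pt) : R := fst (fst p).
Definition py (p : pt) : R := snd (fst p).
Definition pz (p : pt) : R := snd p.

Definition cyl_pt (t theta : R) : pt := (cos theta, sin theta, t).

Inductive piece := PC | PH0 | PHl.

Definition in_piece (l : R) (P : piece) (p : pt) : Prop :=
  match P with
  | PC  => px p ^ 2 + py p ^ 2 = 1 /\ 0 <= pz p <= l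
  | PH0 => px p ^ 2 + py p ^ 2 + pz p ^ 2 = 1 /\ pz p <= 0
  | PHl => px p ^ 2 + py p ^ 2 + (pz p - l) ^ 2 = 1 /\ l <= pz p
  end.

Definition in_N (l : R) (p : pt) : Prop :=
  in_piece l PC p \/ in_piece l PH0 p \/ in_piece l PHl p.

Definition normal (l : R) (P : piece) (p : pt) : pt :=
  match P with
  | PC  => (px p, py p, 0)
  | PH0 => (px p, py p, pz p)
  | PHl => (px p, py p, pz p - l)
  end.

Definition scal (k : R) (p : pt) : pt := (k * px p, k * py p, k * pz p).

Definition curve := R -> pt.

Definition has_deriv (g : curve) (t : R) (v : pt) : Prop :=
  derivable_pt_lim (fun s => px (g s)) t (px v) /\
  derivable_pt_lim (fun s => py (g s)) t (py v) /\
  derivable_pt_lim (fun s => pz (g s)) t (pz v).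

Definition cont_on01 (f : R -> R) : Prop :=
  forall t, 0 <= t <= 1 -> forall eps, 0 < eps -> exists delta, 0 < delta /\
    forall s, 0 <= s <= 1 -> Rabs (s - t) < delta -> Rabs (f s - f t) < eps.

(* A geodesic of N: a C^1 curve on [0,1] (given as the restriction of a map
   R -> R^3; its derivative d on [0,1] is continuous), with values in N,
   parametrized proportionally to arclength with positive length L
   (|gamma'| = L), and which is a geodesic in each piece: on every open
   subinterval of [0,1] on which it stays in one (closed) piece, its
   acceleration exists and is normal to that piece (geodesic equation of an
   embedded surface). *)
Definition is_geodesic (l : R) (g : curve) : Prop :=
  exists (d : curve) (L : R),
    0 < L /\
    (forall t, 0 <= t <= 1 -> in_N l (g t)) /\
    (forall t, 0 <= t <= 1 -> has_deriv g t (d t)) /\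
    cont_on01 (fun s => px (d s)) /\ cont_on01 (fun s => py (d s)) /\
    cont_on01 (fun s => pz (d s)) /\
    (forall t, 0 <= t <= 1 -> px (d t) ^ 2 + py (d t) ^ 2 + pz (d t) ^ 2 = L ^ 2) /\
    (forall (P : piece) (a b : R), 0 <= a -> a < b -> b <= 1 ->
       (forall s, a < s < b -> in_piece l P (g s)) ->
       forall s, a < s < b ->
         exists (acc : pt) (k : R), has_deriv d s acc /\ acc = scal k (normal l P (g s))).

Definition geod_from_to (l : R) (x y : pt) (g : curve) : Prop :=
  is_geodesic l g /\ g 0 = x /\ g 1 = y.

Definition passes_through (g : curve) (z : pt) : Prop :=
  exists t, 0 < t < 1 /\ g t = z.

Definition secure (l : R) (x y : pt) : Prop :=
  exists B : list pt, forall g, geod_from_to l x y g ->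
    exists z, In z B /\ passes_through g z.

Definition insecure (l : R) (x y : pt) : Prop := ~ secure l x y.

Definition secure_manifold (l : R) : Prop :=
  forall x y, in_N l x -> in_N l y -> secure l x y.

(* Main.v *)
Require Import Defs.
From Stdlib Require Import Reals List Lra.
Open Scope R_scope.

Lemma Dsin (K t : R) : derivable_pt_lim (fun s => K * sin (PI*s)) t (K*PI*cos(PI*t)).
Proof.
  assert (H1 : derivable_pt_lim (mult_real_fct PI id) t (PI*1)) by apply derivable_pt_lim_scal, derivable_pt_lim_id.
  pose proof (derivable_pt_lim_comp _ sin t _ _ H1 (derivable_pt_lim_sin _)) as H2.
  pose proof (derivable_pt_lim_scal _ K _ _ H2) as H3.
  unfold mult_real_fct, comp, id in H3.
  replace (K*PI*cos(PI*t)) with (K * (cos (PI*t) * (PI*1))) by ring. exact H3.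
Qed.

Lemma Dcos (K t : R) : derivable_pt_lim (fun s => K * cos (PI*s)) t (-(K*PI)*sin(PI*t)).
Proof.
  assert (H1 : derivable_pt_lim (mult_real_fct PI id) t (PI*1)) by apply derivable_pt_lim_scal, derivable_pt_lim_id.
  pose proof (derivable_pt_lim_comp _ cos t _ _ H1 (derivable_pt_lim_cos _)) as H2.
  pose proof (derivable_pt_lim_scal _ K _ _ H2) as H3.
  unfold mult_real_fct, comp, id in H3.
  replace (-(K*PI)*sin(PI*t)) with (K * (-sin (PI*t) * (PI*1))) by ring. exact H3.
Qed.

Lemma cont01 (f : R -> R) : (forall t, continuity_pt f t) -> cont_on01 f.
Proof.
  intros Hc t _ eps He.
  destruct (Hc t eps He) as [alp [Ha Hx]].
  exists alp; split; [exact Ha|].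
  intros s _ Hs.
  destruct (Req_dec s t) as [->|Hne].
  - unfold Rminus; rewrite Rplus_opp_r, Rabs_R0; exact He.
  - apply (Hx s). split. split; [exact I| auto]. exact Hs.
Qed.

Lemma contsin K : forall t, continuity_pt (fun s => K * sin (PI*s)) t.
Proof. intro t. apply derivable_continuous_pt. exists (K*PI*cos(PI*t)). apply Dsin. Qed.
Lemma contcos K : forall t, continuity_pt (fun s => K * cos (PI*s)) t.
Proof. intro t. apply derivable_continuous_pt. exists (-(K*PI)*sin(PI*t)). apply Dcos. Qed.

Definition bnd (B : list pt) : R :=
  fold_right (fun z m => Rabs (- py z / pz z) + m) 0 B.

Lemma bnd_nonneg B : 0 <= bnd B.
Proof. induction B; simpl; [lra|]. pose proof (Rabs_pos (- py a / pz a)); lra. Qed.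

Lemma bnd_ge B z : In z B -> - py z / pz z <= bnd B.
Proof.
  induction B as [|a B IH]; simpl; [tauto|].
  intros [->|H].
  - pose proof (Rle_abs (- py z / pz z)); pose proof (bnd_nonneg B); unfold bnd in *; lra.
  - pose proof (IH H); pose proof (Rabs_pos (- py a / pz a)); unfold bnd in *; lra.
Qed.

Definition sv (u : R) := / sqrt (1 + u*u).
Definition cv (u : R) := u * sv u.
Definition gc (u : R) : curve := fun t => (1*cos(PI*t), cv u*sin(PI*t), (- sv u)*sin(PI*t)).
Definition dc (u : R) : curve := fun t => (-(1*PI)*sin(PI*t), cv u*PI*cos(PI*t), (- sv u)*PI*cos(PI*t)).

Lemma sv_pos u : 0 < sv u.
Proof. unfold sv. apply Rinv_0_lt_compat, sqrt_lt_R0. nra. Qed.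

Lemma cs1 u : cv u * cv u + sv u * sv u = 1.
Proof.
  unfold cv, sv. assert (h: 0 < sqrt (1+u*u)) by (apply sqrt_lt_R0; nra).
  pose proof (sqrt_sqrt (1+u*u) ltac:(nra)).
  replace (u * / sqrt (1 + u * u) * (u * / sqrt (1 + u * u)) + / sqrt (1 + u * u) * / sqrt (1 + u * u))
    with ((1+u*u) / (sqrt (1 + u * u) * sqrt (1 + u * u))) by (field; lra).
  rewrite H. field. nra.
Qed.

Lemma sin_pos01 t : 0 < t < 1 -> 0 < sin (PI*t).
Proof. intro. apply sin_gt_0; pose proof PI_RGT_0; nra. Qed.
Lemma sin_nn01 t : 0 <= t <= 1 -> 0 <= sin (PI*t).
Proof. intro. apply sin_ge_0; pose proof PI_RGT_0; nra. Qed.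

Lemma gc_geod l u : 0 < l -> geod_from_to l (cyl_pt 0 0) (cyl_pt 0 PI) (gc u).
Proof.
  intro hl. pose proof (cs1 u) as Hcs. pose proof (sv_pos u) as Hs. pose proof PI_RGT_0.
  split; [|split].
  - exists (dc u), PI. split; [lra|]. split; [|split; [|split; [|split; [|split; [|split]]]]].
    + intros t Ht. right; left. unfold in_piece, gc, px, py, pz; simpl.
      pose proof (sin_nn01 t Ht). pose proof (sin2_cos2 (PI*t)). unfold Rsqr in *. split; nra.
    + intros t _. unfold has_deriv, gc, dc, px, py, pz; simpl.
      split; [|split].
      * apply Dcos.
      * apply Dsin.
      * apply Dsin.
    + apply cont01. apply contsin.
    + apply cont01. apply contcos.
    + apply cont01. apply contcos.
    + intros t _. unfold dc, px, py, pz; simpl. pose proof (sin2_cos2 (PI*t)). unfold Rsqr in *.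
      replace ((- (1 * PI) * sin (PI * t)) * ((- (1 * PI) * sin (PI * t)) * 1) +
               (cv u * PI * cos (PI * t)) * ((cv u * PI * cos (PI * t)) * 1) +
               (- sv u * PI * cos (PI * t)) * ((- sv u * PI * cos (PI * t)) * 1))
        with (PI*PI*(sin (PI*t) * sin (PI*t) + (cv u * cv u + sv u * sv u) * (cos (PI*t) * cos (PI*t)))) by ring.
      rewrite Hcs. nra.
    + intros P a b ha hab hb Hin s Hs0.
      destruct P.
      * exfalso. destruct (Hin ((a+b)/2) ltac:(lra)) as [_ Hz].
        unfold gc, pz in Hz; simpl in Hz. pose proof (sin_pos01 ((a+b)/2) ltac:(lra)). nra.
      * exists (-(1*PI)*PI*cos(PI*s), -(cv u*PI*PI)*sin(PI*s), -((- sv u)*PI*PI)*sin(PI*s)), (-(PI*PI)).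
        split.
        -- unfold has_deriv, dc, px, py, pz; simpl. split; [|split].
           ++ apply Dsin.
           ++ apply Dcos.
           ++ apply Dcos.
        -- unfold scal, normal, gc, px, py, pz; simpl. f_equal; [f_equal|]; ring.
      * exfalso. destruct (Hin ((a+b)/2) ltac:(lra)) as [_ Hz].
        unfold gc, pz in Hz; simpl in Hz. pose proof (sin_pos01 ((a+b)/2) ltac:(lra)). nra.
  - unfold gc, cyl_pt. rewrite Rmult_0_r, sin_0. f_equal; [f_equal|]; ring.
  - unfold gc, cyl_pt. rewrite Rmult_1_r, sin_PI. f_equal; [f_equal|]; ring.
Qed.

Lemma gc_avoid u z t : 0 < t < 1 -> gc u t = z -> - py z / pz z = u.
Proof.
  intros Ht <-. unfold gc, py, pz; simpl. pose proof (sin_pos01 t Ht). pose proof (sv_pos u).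
  unfold cv. field. split; lra.
Qed.

Theorem mainTheorem7 (l : R) (hl : 0 < l) :
  insecure l (cyl_pt 0 0) (cyl_pt 0 PI) /\ ~ secure_manifold l.
Proof.
  assert (Hins : insecure l (cyl_pt 0 0) (cyl_pt 0 PI)).
  { intros [B HB]. destruct (HB (gc (bnd B + 1)) (gc_geod l _ hl)) as [z [Hz [t [Ht Hg]]]].
    pose proof (gc_avoid _ _ _ Ht Hg). pose proof (bnd_ge B z Hz). lra. }
  split; [exact Hins|].
  intro Hs. apply Hins. apply Hs; left; unfold in_piece, cyl_pt, px, py, pz; simpl;
  rewrite ?cos_0, ?sin_0, ?cos_PI, ?sin_PI; split; lra.
Qed.
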